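(* Fix any finitely supported real random variable $\mathbf{X}$ with $\mathbf{E}[\mathbf{X}]=0$ and $\mathrm{Var}[\mathbf{X}]=1$, any degree bound $d$, any sparsity parameter $s\in\mathbb{N}$, and a gap value $T\in\mathbb{N}$. Let $\boldsymbol{\eta}_0$ be the noise distribution that always outputs $0$. If $T\le \mathrm{Max\text{-}Sparsity\text{-}Gap}_{\mathbf{X},d}(s)-1$, then there exists a real $\varepsilon>0$, independent of $n$, such that any algorithm for the $(\mathbf{X},d,\boldsymbol{\eta}_0,s,T,\varepsilon)$ polynomial sparsity testing problem must use $\Omega_{\mathbf{X},d,s}(\log n)$ samples.
   Context: A multilinear polynomial of degree at most $d$ over $\mathbb{R}^n$ is $p(x)=\sum_{S\subseteq[n],|S|\le d}\widehat{p}(S)\prod_{i\in S}x_i$; $\mathrm{sparsity}(p)$ is the number of nonzero coefficients, and $\|p\|_{\mathrm{coeff}}=(\sum_S\widehat{p}(S)^2)^{1/2}$. For nonzero $p$, $p$ is $\varepsilon$-far from $T$-sparse if $\min_q\|p-q\|_{\mathrm{coeff}}/\|p\|_{\mathrm{coeff}}\ge\varepsilon$ over all $T$-sparse degree-$d$ multilinear $q$. $\mathrm{Max\text{-}Sparsity\text{-}Gap}_{\mathbf{X},d}(s)$ is the largest natural number $t$ such that there exist (for some $n$) multilinear polynomials $p,q$ of degree at most $d$ with $\mathrm{sparsity}(p)=s$, $\mathrm{sparsity}(q)=t$, and $p(\mathbf{X}^{\otimes n})$, $q(\mathbf{X}^{\otimes n})$ identically distributed, while no such pair exists with $\mathrm{sparsity}(q)>t$.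 The $(\mathbf{X},d,\boldsymbol{\eta},s,T,\varepsilon)$ polynomial sparsity testing problem (with a norm bound parameter $K\ge1$): an algorithm receives i.i.d. samples $(\mathbf{x},p(\mathbf{x})+\boldsymbol{\eta})$, $\mathbf{x}\sim\mathbf{X}^{\otimes n}$, $\boldsymbol{\eta}$ independent, where $p$ is an unknown degree-$\le d$ multilinear polynomial over $\mathbb{R}^n$ with $1/K\le\|p\|_{\mathrm{coeff}}\le K$; it must output ''$s$-sparse'' with probability $\ge 9/10$ if $\mathrm{sparsity}(p)\le s$, and ''$\varepsilon$-far from $T$-sparse'' with probability $\ge 9/10$ if $p$ is $\varepsilon$-far from $T$-sparse. The algorithm may depend on $\mathbf{X},\boldsymbol{\eta},d,s,T,K,\varepsilon$. *)

(* Defs.v *)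
From HB Require Import structures.
From mathcomp Require Import all_boot all_order all_algebra.
From mathcomp Require Import reals exp.
Set Implicit Arguments. Unset Strict Implicit. Unset Printing Implicit Defensive.
Import Order.TTheory GRing.Theory Num.Theory.
Local Open Scope ring_scope.

Section Defs.
Variable R : realType.

(** Multilinear polynomials over R^n: one coefficient per subset S of [n]. *)
Definition mlpoly (n : nat) := {ffun {set 'I_n} -> R}.

Definition deg_le (n d : nat) (p : mlpoly n) : Prop :=
  forall S : {set 'I_n}, (d < #|S|)%N -> p S = 0.

Definition sparsity (n : nat) (p : mlpoly n) : nat :=
  #|[set S : {set 'I_n} | p S != 0]|.

Definition meval (n : nat) (p : mlpoly n) (x : 'I_n -> R) : R :=
  \sum_(S : {set 'I_n}) p S * \prod_(i in S) x i.

Definition coeff_norm (n : nat) (p : mlpoly n) : R :=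
  Num.sqrt (\sum_(S : {set 'I_n}) p S ^+ 2).

Definition far_from_sparse (n d T : nat) (eps : R) (p : mlpoly n) : Prop :=
  p != 0 /\
  forall q : mlpoly n, deg_le d q -> (sparsity q <= T)%N ->
    eps <= coeff_norm [ffun S => p S - q S] / coeff_norm p.

(** A finitely supported random variable X is given by its (duplicate-free)
    support [supp] and its probability mass function [w]. A point of
    X^{(x) n} is encoded by the indices in [supp] of its coordinates. *)
Variables (supp : seq R) (w : R -> R).

Definition pt (n : nat) (x : {ffun 'I_n -> 'I_(size supp)}) : 'I_n -> R :=
  fun i => nth 0 supp (x i).

Definition pt_weight (n : nat) (x : {ffun 'I_n -> 'I_(size supp)}) : R :=
  \prod_(i < n) w (nth 0 supp (x i)).

Definition prob_val (n : nat) (p : mlpoly n) (y : R) : R :=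
  \sum_(x : {ffun 'I_n -> 'I_(size supp)} | meval p (pt x) == y) pt_weight x.

Definition ident_distr (n : nat) (p q : mlpoly n) : Prop :=
  forall y : R, prob_val p y = prob_val q y.

Definition is_max_sparsity_gap (d s t : nat) : Prop :=
  (exists (n : nat) (p q : mlpoly n),
      deg_le d p /\ deg_le d q /\ sparsity p = s /\ sparsity q = t /\
      ident_distr p q) /\
  (forall (n : nat) (p q : mlpoly n),
      deg_le d p -> deg_le d q -> sparsity p = s -> ident_distr p q ->
      (sparsity q <= t)%N).

(** A (randomized) tester using m samples on n variables is modelled by
    the probability [A smp] in [0,1] that it outputs "s-sparse" on the
    sample sequence [smp] (list of m labelled points (x, y)). *)
Definition tester (n m : nat) := ('I_m -> ('I_n -> R) * R) -> R.

(** Probability that A outputs "s-sparse" on i.i.d. samples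
    (x, p(x) + eta) with x ~ X^{(x)n} and eta = eta_0 = 0. *)
Definition accept_prob (n m : nat) (A : tester n m) (p : mlpoly n) : R :=
  \sum_(xs : {ffun 'I_m -> {ffun 'I_n -> 'I_(size supp)}})
     (\prod_(j < m) pt_weight (xs j)) *
     A (fun j => (pt (xs j), meval p (pt (xs j)) + 0)).

Definition solves_testing (d s T : nat) (K eps : R) (n m : nat)
    (A : tester n m) : Prop :=
  (forall smp, 0 <= A smp <= 1) /\
  forall p : mlpoly n, deg_le d p ->
    K^-1 <= coeff_norm p <= K ->
    ((sparsity p <= s)%N -> 9 / 10 <= accept_prob A p) /\
    (far_from_sparse d T eps p -> 1 - accept_prob A p >= 9 / 10).

End Defs.

(* Main.v *)
Require Import Defs.
From HB Require Import structures.
From mathcomp Require Import all_boot all_order all_algebra.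
From mathcomp Require Import reals exp.
From mathcomp Require Import ring lra.
From Stdlib Require Import FunctionalExtensionality Lia.
From mathcomp Require Import zify.
Import Order.TTheory GRing.Theory Num.Theory.
Local Open Scope ring_scope.
Set Implicit Arguments. Unset Strict Implicit. Unset Printing Implicit Defensive.

Section Gen.
Variable R : realType.

Lemma PRODG (I J : finType) (mu : J -> R) (h : I -> J -> R) :
  \sum_(f : {ffun I -> J}) (\prod_i mu (f i)) * \prod_i h i (f i)
  = \prod_i \sum_j mu j * h i j.
Proof. rewrite bigA_distr_bigA; apply eq_bigr => f _; by rewrite -big_split. Qed.

Lemma mass (I J : finType) (mu : J -> R) : \sum_j mu j = 1 ->
  \sum_(f : {ffun I -> J}) \prod_i mu (f i) = 1.
Proof.
move=> h; transitivity (\prod_(i:I) \sum_j mu j * 1).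
  rewrite -(PRODG mu (fun _ _ => 1)); apply eq_bigr => f _; by rewrite [X in _ * X]big1 ?mulr1.
apply: big1 => i _; under eq_bigr do rewrite mulr1; exact h.
Qed.

Lemma sum_ind (J : finType) (F : J -> R) (a : J) : \sum_j F j * (j == a)%:R = F a.
Proof. rewrite (bigD1 a) //= eqxx mulr1 big1 ?addr0 // => j /negbTE ->; by rewrite mulr0. Qed.

Lemma expand (J : finType) (F : J -> R) (v : J) : F v = \sum_u F u * (v == u)%:R.
Proof. rewrite -sum_ind; apply eq_bigr => u _; by rewrite eq_sym. Qed.

Lemma prod_eqffun (I : finType) (T : eqType) (f g : {ffun I -> T}) :
  \prod_i ((f i == g i)%:R : R) = (f == g)%:R.
Proof.
case: eqP => [->|ne]; first by rewrite big1 // => i _; rewrite eqxx.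
case: (pickP (fun i => f i != g i)) => [i hi|h].
  by rewrite (bigD1 i) //= (negbTE hi) mul0r.
by exfalso; apply: ne; apply/ffunP => i; move: (h i) => /negbFE/eqP.
Qed.

Lemma PICKPROD (a n : nat) (s : 'I_a -> 'I_n) (inj : injective s) (phi : 'I_n -> 'I_a -> R) :
  \prod_i (if [pick i0 | s i0 == i] is Some i0 then phi i i0 else 1)
  = \prod_i0 phi (s i0) i0.
Proof.
rewrite (bigID (fun i => i \in [set s x | x in [set: 'I_a]])) /=.
rewrite [X in _ * X]big1 ?mulr1; last first.
  move=> i hi; case: pickP => // i0 /eqP e.
  by move: hi; rewrite -e imset_f ?in_setT.
rewrite big_imset /=; last by move=> x y _ _; apply inj.
apply eq_big => [i|i _]; first by rewrite in_setT.
case: pickP => [j /eqP /inj -> // | /(_ i)]; by rewrite eqxx.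
Qed.

Lemma seq_ind (T : eqType) (Y : seq T) (F : T -> R) (v : T) : uniq Y -> v \in Y ->
  \sum_(y <- Y) (v == y)%:R * F y = F v.
Proof.
elim: Y => // y Y IH /= /andP [yY uY]; rewrite in_cons big_cons.
have [e _|ne /= vY] := eqVneq v y.
  subst y; rewrite mul1r big_seq big1 ?addr0 // => y' y'Y.
  have [e|] := eqVneq v y'; last by rewrite mul0r.
  by subst y'; rewrite y'Y in yY.
by rewrite mul0r add0r IH.
Qed.

End Gen.
Section Samp.
Variable R : realType.
Variables (supp : seq R) (w : R -> R).
Hypothesis hw1 : \sum_(a <- supp) w a = 1.
Hypothesis hwpos : forall a, a \in supp -> 0 < w a.
Local Notation k := (size supp).

Definition nu (c : 'I_k) : R := w (nth 0 supp c).

Lemma sum_nth (G : R -> R) : \sum_(c < k) G (nth 0 supp c) = \sum_(a <- supp) G a.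
Proof. by rewrite (big_nth 0) big_mkord. Qed.

Lemma nu_ge0 c : 0 <= nu c.
Proof. by apply/ltW/hwpos/mem_nth; exact: ltn_ord. Qed.

Lemma sum_nu : \sum_c nu c = 1.
Proof. by rewrite -hw1 -sum_nth. Qed.

Definition restr a n (s : 'I_a -> 'I_n) (x : {ffun 'I_n -> 'I_k}) : {ffun 'I_a -> 'I_k} :=
  [ffun i0 => x (s i0)].

Lemma ind_restr a n (s : 'I_a -> 'I_n) (inj : injective s) x z :
  ((restr s x == z)%:R : R) =
  \prod_i (if [pick i0 | s i0 == i] is Some i0 then ((x i == z i0)%:R) else 1).
Proof.
rewrite (PICKPROD inj (fun i i0 => ((x i == z i0)%:R : R))) -prod_eqffun.
by apply eq_bigr => i0 _; rewrite ffunE.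
Qed.

Lemma MARG a n (s : 'I_a -> 'I_n) (inj : injective s) (z : {ffun 'I_a -> 'I_k}) :
  \sum_x pt_weight w x * (restr s x == z)%:R = \prod_i0 nu (z i0).
Proof.

under [LHS]eq_bigr do rewrite (ind_restr inj).
rewrite (PRODG nu (fun i c => if [pick i0 | s i0 == i] is Some i0 then ((c == z i0)%:R) else 1)).
rewrite -(PICKPROD inj (fun _ i0 => nu (z i0))); apply eq_bigr => i _.
case: pickP => [i0 _|_]; first by rewrite sum_ind.
under eq_bigr do rewrite mulr1; exact sum_nu.
Qed.

Lemma IND a c n (s : 'I_a -> 'I_n) (t : 'I_c -> 'I_n) (injs : injective s) (injt : injective t)
  (disj : forall i0 i1, s i0 != t i1) (z : {ffun 'I_a -> 'I_k}) (z' : {ffun 'I_c -> 'I_k}) :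
  \sum_x pt_weight w x * ((restr s x == z)%:R * (restr t x == z')%:R)
  = \prod_i0 nu (z i0) * \prod_i1 nu (z' i1).
Proof.
under [LHS]eq_bigr do rewrite (ind_restr injs) (ind_restr injt) -big_split /=.
rewrite (PRODG nu (fun i c => (if [pick i0 | s i0 == i] is Some i0 then ((c == z i0)%:R) else 1)
   * (if [pick i1 | t i1 == i] is Some i1 then ((c == z' i1)%:R) else 1))).
rewrite -(PICKPROD injs (fun _ i0 => nu (z i0))) -(PICKPROD injt (fun _ i1 => nu (z' i1))).
rewrite -big_split; apply eq_bigr => i _ /=.
case: pickP => [i0 /eqP e0|_]; case: pickP => [i1 /eqP e1|_].
- by move: (disj i0 i1); rewrite e0 e1 eqxx.
- by under eq_bigr do rewrite mulr1; rewrite sum_ind mulr1.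
- by under eq_bigr do rewrite mul1r; rewrite sum_ind mul1r.
- by under eq_bigr do rewrite mulr1 mulr1; rewrite sum_nu mulr1.
Qed.


Variable m : nat.
Definition Wgt n (xs : {ffun 'I_m -> {ffun 'I_n -> 'I_k}}) : R := \prod_j pt_weight w (xs j).
Definition zb a n (s : 'I_a -> 'I_n) (xs : {ffun 'I_m -> {ffun 'I_n -> 'I_k}}) :
  {ffun 'I_m -> {ffun 'I_a -> 'I_k}} := [ffun j => restr s (xs j)].

Lemma Wgt_ge0 n (xs : {ffun 'I_m -> {ffun 'I_n -> 'I_k}}) : 0 <= Wgt xs.
Proof. by apply: prodr_ge0 => j _; apply: prodr_ge0 => i _; exact: nu_ge0. Qed.

Lemma ptmass n : \sum_(x : {ffun 'I_n -> 'I_k}) pt_weight w x = 1.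
Proof. exact: (@mass R 'I_n _ nu sum_nu). Qed.

Lemma Wmass n : \sum_(xs : {ffun 'I_m -> {ffun 'I_n -> 'I_k}}) Wgt xs = 1.
Proof. rewrite /Wgt; exact: (@mass R 'I_m _ (@pt_weight R supp w n) (ptmass n)). Qed.

Lemma ind_zb a n (s : 'I_a -> 'I_n) xs u :
  ((zb s xs == u)%:R : R) = \prod_j (restr s (xs j) == u j)%:R.
Proof. rewrite -prod_eqffun; apply eq_bigr => j _; by rewrite ffunE. Qed.

Lemma XMARG a n (s : 'I_a -> 'I_n) (inj : injective s) (F : {ffun 'I_m -> {ffun 'I_a -> 'I_k}} -> R) :
  \sum_(xs : {ffun 'I_m -> {ffun 'I_n -> 'I_k}}) Wgt xs * F (zb s xs) = \sum_u Wgt u * F u.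
Proof.
under [LHS]eq_bigr => xs _ do rewrite (expand F (zb s xs)) mulr_sumr.
rewrite exchange_big /=; apply eq_bigr => u _.
under eq_bigr do rewrite mulrCA ind_zb.
rewrite -mulr_sumr mulrC; congr (_ * _).
rewrite (PRODG (@pt_weight R supp w n) (fun j x => (restr s x == u j)%:R)).
apply eq_bigr => j _; exact: MARG.
Qed.

Lemma expand2 (J1 J2 : finType) (F : J1 -> R) (G : J2 -> R) v v' :
  F v * G v' = \sum_u \sum_u' F u * G u' * ((v == u)%:R * (v' == u')%:R).
Proof.
rewrite (expand F v) (expand G v') mulr_suml; apply eq_bigr => u _.
rewrite mulr_sumr; apply eq_bigr => u' _; ring.
Qed.

Lemma XIND0 a c n (s : 'I_a -> 'I_n) (t : 'I_c -> 'I_n) (injs : injective s) (injt : injective t)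
  (disj : forall i0 i1, s i0 != t i1) u u' :
  \sum_(xs : {ffun 'I_m -> {ffun 'I_n -> 'I_k}}) Wgt xs * ((zb s xs == u)%:R * (zb t xs == u')%:R)
  = Wgt u * Wgt u'.
Proof.
under [LHS]eq_bigr => xs _ do rewrite !ind_zb -big_split /=.
rewrite (PRODG (@pt_weight R supp w n) (fun j x => (restr s x == u j)%:R * (restr t x == u' j)%:R)).
rewrite /Wgt -big_split; apply eq_bigr => j _; exact: IND.
Qed.

Lemma XIND a c n (s : 'I_a -> 'I_n) (t : 'I_c -> 'I_n) (injs : injective s) (injt : injective t)
  (disj : forall i0 i1, s i0 != t i1) F G :
  \sum_(xs : {ffun 'I_m -> {ffun 'I_n -> 'I_k}}) Wgt xs * (F (zb s xs) * G (zb t xs))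
  = (\sum_u Wgt u * F u) * (\sum_u Wgt u * G u).
Proof.
under [LHS]eq_bigr => xs _ do rewrite (expand2 F G) mulr_sumr.
rewrite exchange_big /=.
under [LHS]eq_bigr => u _ do (under eq_bigr => xs _ do rewrite mulr_sumr; rewrite exchange_big /=).
rewrite mulr_suml; apply eq_bigr => u _; rewrite mulr_sumr; apply eq_bigr => u' _.
under eq_bigr do rewrite mulrCA.
by rewrite -mulr_sumr XIND0 //; ring.
Qed.

Definition vecF a (F : mlpoly R a) (u : {ffun 'I_m -> {ffun 'I_a -> 'I_k}}) : {ffun 'I_m -> R} :=
  [ffun j => meval F (pt (u j))].

Lemma vec_ind a (F : mlpoly R a) u y :
  ((vecF F u == y)%:R : R) = \prod_j (meval F (pt (u j)) == y j)%:R.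
Proof. rewrite -prod_eqffun; apply eq_bigr => j _; by rewrite ffunE. Qed.

Lemma vec_prob a (F : mlpoly R a) y :
  \sum_u Wgt u * (vecF F u == y)%:R = \prod_j prob_val supp w F (y j).
Proof.
under [LHS]eq_bigr => u _ do rewrite vec_ind.
rewrite (PRODG (@pt_weight R supp w a) (fun j (x : {ffun 'I_a -> 'I_k}) => ((meval F (pt x) == y j)%:R : R))).
apply eq_bigr => j _; rewrite /prob_val [RHS]big_mkcond; apply eq_bigr => x _ /=.
by case: eqP => _; rewrite ?mulr1 ?mulr0.
Qed.


Lemma sum1_seq (T : Type) (Y : seq T) : \sum_(y <- Y) (1 : R) = (size Y)%:R.
Proof. elim: Y => [|y Y IH]; by rewrite ?big_nil ?big_cons ?IH //= -add1n natrD. Qed.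

Lemma seq_ind1 (T : eqType) (Y : seq T) (v : T) : uniq Y -> v \in Y ->
  \sum_(y <- Y) ((v == y)%:R : R) = 1.
Proof.
move=> uY vY; transitivity (\sum_(y <- Y) (v == y)%:R * (fun _ => (1:R)) y).
  by apply eq_bigr => y _; rewrite mulr1.
exact: seq_ind.
Qed.

Lemma size_map_enum (T : finType) (S : Type) (f : T -> S) : size (map f (enum T)) = #|T|.
Proof. by rewrite size_map cardE. Qed.

Definition Hy a (P Q : mlpoly R a) (y : {ffun 'I_m -> R}) (u : {ffun 'I_m -> {ffun 'I_a -> 'I_k}}) : R :=
  (vecF P u == y)%:R - (vecF Q u == y)%:R.

Lemma main_bound a n B (P Q : mlpoly R a) (s : 'I_B -> 'I_a -> 'I_n)
  (inj : forall b, injective (s b)) (disj : forall b b' i0 i1, b != b' -> s b i0 != s b' i1)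
  (idd : ident_distr supp w P Q)
  (A' : {ffun 'I_m -> {ffun 'I_n -> 'I_k}} -> {ffun 'I_m -> R} -> R)
  (A01 : forall xs y, 0 <= A' xs y <= 1)
  (hP : forall b, 9/10 <= \sum_xs Wgt xs * A' xs (vecF P (zb (s b) xs)))
  (hQ : forall b, \sum_xs Wgt xs * A' xs (vecF Q (zb (s b) xs)) <= 1/10) :
  (3/10 : R) * B%:R <= 2 * ((k ^ a) ^ m)%:R.
Proof.
pose U := {ffun 'I_m -> {ffun 'I_a -> 'I_k}}.
pose Y := undup (map (vecF P) (enum U) ++ map (vecF Q) (enum U)).
have uY : uniq Y := undup_uniq _.
have inP u : vecF P u \in Y by rewrite mem_undup mem_cat map_f ?mem_enum.
have inQ u : vecF Q u \in Y by rewrite mem_undup mem_cat orbC map_f ?mem_enum.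
have hsY : (size Y <= 2 * (k ^ a) ^ m)%N.
  apply: leq_trans (size_undup _) _.
  rewrite size_cat !size_map_enum.
  by rewrite card_ffun card_ffun !card_ord mul2n addnn.
pose D xs y := \sum_b Hy P Q y (zb (s b) xs).
have stepA : 8/10 * B%:R <= \sum_xs Wgt xs * \sum_(y <- Y) A' xs y * D xs y.
  have : \sum_(b < B) (8/10 : R) <= \sum_(b < B) (\sum_xs Wgt xs * A' xs (vecF P (zb (s b) xs))
                  - \sum_xs Wgt xs * A' xs (vecF Q (zb (s b) xs))).
    apply: ler_sum => b _; have := hP b; have := hQ b; lra.
  move=> h; apply: (le_trans _ (le_trans h _)).
    by rewrite sumr_const card_ord mulr_natr.
  rewrite le_eqVlt; apply/orP; left; apply/eqP.
  under eq_bigr do rewrite -sumrB.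
  rewrite exchange_big /=; apply eq_bigr => xs _.
  under eq_bigr do rewrite -mulrBr.
  rewrite -mulr_sumr; congr (_ * _).
  under [RHS]eq_bigr => y _ do rewrite /D mulr_sumr.
  rewrite exchange_big /=; apply eq_bigr => b _.
  under eq_bigr => y _ do rewrite /Hy mulrBr mulrC [X in _ - X]mulrC.
  by rewrite sumrB !seq_ind.
have stepB : \sum_xs Wgt xs * \sum_(y <- Y) A' xs y * D xs y
   <= (\sum_(y <- Y) \sum_xs Wgt xs * D xs y ^+ 2) / 4 + (size Y)%:R.
  apply: (@le_trans _ _ (\sum_xs Wgt xs * ((\sum_(y <- Y) D xs y ^+ 2) / 4 + (size Y)%:R))).
    apply: ler_sum => xs _; apply: ler_wpM2l.
      exact: Wgt_ge0.
    rewrite -sum1_seq mulr_suml -big_split /=; apply: ler_sum => y _.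
    have := sqr_ge0 (D xs y / 2 - A' xs y); case/andP: (A01 xs y) => h0 h1; nra.
  under eq_bigr do rewrite mulrDr.
  rewrite big_split /= -[X in _ + X]mulr_suml Wmass mul1r lerD2r.
  under eq_bigr do rewrite mulrA.
  rewrite le_eqVlt; apply/orP; left; apply/eqP; rewrite -mulr_suml; congr (_ / _).
  rewrite [RHS]exchange_big /=; apply eq_bigr => xs _; by rewrite mulr_sumr.
have offd y (b b' : 'I_B) : b != b' ->
    \sum_xs Wgt xs * (Hy P Q y (zb (s b) xs) * Hy P Q y (zb (s b') xs)) = 0.
  move=> ne; rewrite (XIND (inj b) (inj b') (fun i0 i1 => disj b b' i0 i1 ne) (Hy P Q y) (Hy P Q y)).
  have -> : \sum_u Wgt u * Hy P Q y u = 0; last by rewrite mul0r.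
  under eq_bigr do rewrite /Hy mulrBr.
  rewrite sumrB !vec_prob; apply/eqP; rewrite subr_eq0; apply/eqP; apply eq_bigr => j _; exact: idd.
have e1 y : \sum_xs Wgt xs * D xs y ^+ 2 = \sum_b \sum_xs Wgt xs * Hy P Q y (zb (s b) xs) ^+ 2.
  transitivity (\sum_xs \sum_b \sum_b' Wgt xs * (Hy P Q y (zb (s b) xs) * Hy P Q y (zb (s b') xs))).
    apply eq_bigr => xs _; rewrite /D expr2 mulr_suml mulr_sumr; apply eq_bigr => b _.
    by rewrite mulr_sumr mulr_sumr.
  rewrite exchange_big /=; apply eq_bigr => b _; rewrite exchange_big /=.
  rewrite (bigD1 b) //= [X in _ + X]big1 ?addr0; first by under eq_bigr do rewrite -expr2.
  by move=> b' ne; apply: offd; rewrite eq_sym.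
have stepC : \sum_(y <- Y) \sum_xs Wgt xs * D xs y ^+ 2 <= 2 * B%:R.
  under eq_bigr do rewrite e1.
  rewrite exchange_big /=.
  apply: (@le_trans _ _ (\sum_(b < B) (2:R))); last by rewrite sumr_const card_ord mulr_natr.
  apply: ler_sum => b _; rewrite exchange_big /=.
  apply: (@le_trans _ _ (\sum_xs Wgt xs * 2)); last by rewrite -mulr_suml Wmass mul1r.
  apply: ler_sum => xs _; rewrite -mulr_sumr; apply: ler_wpM2l; first exact: Wgt_ge0.
  apply: (@le_trans _ _ (\sum_(y <- Y) ((vecF P (zb (s b) xs) == y)%:R + (vecF Q (zb (s b) xs) == y)%:R))).
    apply: ler_sum => y _; rewrite /Hy.
    by case: eqP => _; case: eqP => _; rewrite /= ?mulr1n ?mulr0n ?subrr ?subr0 ?sub0r; lra.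
  by rewrite big_split /= !seq_ind1.
have := hsY; rewrite -(ler_nat R) natrM => hY.
lra.
Qed.


Definition emb a n (s : 'I_a -> 'I_n) (P : mlpoly R a) : mlpoly R n :=
  [ffun S => \sum_(S0 : {set 'I_a} | [set s x | x in S0] == S) P S0].

Section Emb.
Variables (a n : nat) (s : 'I_a -> 'I_n) (inj : injective s) (P : mlpoly R a).

Lemma emb_im (S0 : {set 'I_a}) : emb s P [set s x | x in S0] = P S0.
Proof. by rewrite ffunE (big_pred1 S0) // => S1 /=; rewrite (inj_eq (imset_inj inj)). Qed.

Lemma emb_out S : (forall S0 : {set 'I_a}, [set s x | x in S0] != S) -> emb s P S = 0.
Proof. by move=> h; rewrite ffunE big_pred0 // => S0; apply/negbTE. Qed.

Lemma emb_big (V : Type) (idx : V) (op : Monoid.com_law idx) (F : R -> {set 'I_n} -> V)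
  (F0 : forall S, F 0 S = idx) :
  \big[op/idx]_S F (emb s P S) S = \big[op/idx]_S0 F (P S0) [set s x | x in S0].
Proof.
rewrite (bigID (fun S : {set 'I_n} => S \in [set [set s x | x in S0] | S0 : {set 'I_a} in [set: {set 'I_a}]])) /=.
rewrite [X in op _ X]big1 ?Monoid.mulm1; last first.
  move=> S hS; rewrite emb_out ?F0 // => S0; apply/negP => /eqP e.
  by move: hS; rewrite -e imset_f ?in_setT.
rewrite big_imset /=; last by move=> x y _ _; apply: imset_inj.
apply eq_big => [S0|S0 _]; [by rewrite in_setT | by rewrite emb_im].
Qed.

Lemma emb_meval (x : 'I_n -> R) : meval (emb s P) x = meval P (fun i0 => x (s i0)).
Proof.
rewrite /meval (@emb_big R 0 +%R (fun c S => c * \prod_(i in S) x i)); last by move=> S; rewrite mul0r.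
apply eq_bigr => S0 _; rewrite big_imset //= => i j _ _; exact: inj.
Qed.

Lemma emb_norm : coeff_norm (emb s P) = coeff_norm P.
Proof.
rewrite /coeff_norm (@emb_big R 0 +%R (fun c _ => c ^+ 2)) //.
by move=> S; rewrite expr2 mulr0.
Qed.

Lemma card_setb (T : finType) (b : pred T) : #|[set x | b x]| = \sum_x (b x : nat).
Proof. rewrite -sum1_card big_mkcond; apply eq_bigr => x _; rewrite inE; by case: (b x). Qed.

Lemma emb_sparsity : sparsity (emb s P) = sparsity P.
Proof.
rewrite /sparsity !card_setb (@emb_big nat 0%N addn (fun c _ => (c != 0 : nat))) //.
by move=> S; rewrite eqxx.
Qed.

Lemma emb_deg d : deg_le d P -> deg_le d (emb s P).
Proof.
move=> hP S hS; case: (pickP (fun S0 : {set 'I_a} => [set s x | x in S0] == S)) => [S0 /eqP e|none].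
  by subst S; rewrite emb_im hP //; rewrite card_imset in hS.
by apply: emb_out => S0; rewrite none.
Qed.

End Emb.

Definition scal a (c : R) (P : mlpoly R a) : mlpoly R a := [ffun S => c * P S].

Lemma scal_meval a c (P : mlpoly R a) x : meval (scal c P) x = c * meval P x.
Proof. rewrite /meval mulr_sumr; apply eq_bigr => S _; by rewrite ffunE mulrA. Qed.

Lemma scal_sparsity a c (P : mlpoly R a) : c != 0 -> sparsity (scal c P) = sparsity P.
Proof.
move=> hc; rewrite /sparsity; apply: eq_card => S.
by rewrite !inE ffunE mulf_eq0 negb_or hc.
Qed.

Lemma scal_deg a c (P : mlpoly R a) d : deg_le d P -> deg_le d (scal c P).
Proof. by move=> h S hS; rewrite ffunE h ?mulr0. Qed.

Lemma scal_sq a c (P : mlpoly R a) : \sum_S (scal c P S) ^+ 2 = c ^+ 2 * \sum_S P S ^+ 2.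
Proof. rewrite mulr_sumr; apply eq_bigr => S _; by rewrite ffunE exprMn. Qed.

Lemma scal_prob a c (P : mlpoly R a) y : c != 0 ->
  prob_val supp w (scal c P) y = prob_val supp w P (y / c).
Proof.
move=> hc; rewrite /prob_val; apply eq_bigl => x; rewrite scal_meval.
apply/eqP/eqP => [<-|->]; first by rewrite [c * _]mulrC mulfK.
by rewrite mulrC divfK.
Qed.


Section Mom.
Hypothesis hm1 : \sum_(a <- supp) w a * a = 0.
Hypothesis hm2 : \sum_(a <- supp) w a * a ^+ 2 = 1.

Lemma prod_in (T : finType) (A : {set T}) (F : T -> R) :
  \prod_(i in A) F i = \prod_i (if i \in A then F i else 1).
Proof. by rewrite big_mkcond. Qed.

Lemma mom n (S S' : {set 'I_n}) :
  \sum_(x : {ffun 'I_n -> 'I_k}) pt_weight w x * (\prod_(i in S) pt x i * \prod_(i in S') pt x i)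
  = (S == S')%:R.
Proof.
under [LHS]eq_bigr => x _ do rewrite (prod_in S) (prod_in S') -big_split /=.
rewrite (PRODG nu (fun i c => (if i \in S then nth 0 supp c else 1) * (if i \in S' then nth 0 supp c else 1))).
have f2 : \sum_c nu c * (nth 0 supp c * nth 0 supp c) = 1.
  rewrite -[RHS]hm2 -(sum_nth (fun a => w a * a ^+ 2)); apply eq_bigr => c _; by rewrite expr2.
have f1 : \sum_c nu c * nth 0 supp c = 0.
  by rewrite -[RHS]hm1 -(sum_nth (fun a => w a * a)).
case: eqP => [<-|ne].
  apply: big1 => i _; case: (i \in S); first exact: f2.
  under eq_bigr do rewrite !mulr1; exact: sum_nu.
case: (pickP (fun i => (i \in S) != (i \in S'))) => [i hi | h]; last first.
  by exfalso; apply: ne; apply/setP => i; move/negbFE: (h i) => /eqP.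
rewrite (bigD1 i) //=; move: hi; case: (i \in S); case: (i \in S') => //= _.
  by under eq_bigr do rewrite mulr1; rewrite f1 mul0r.
by under eq_bigr do rewrite mul1r; rewrite f1 mul0r.
Qed.

Lemma E2 n (P : mlpoly R n) :
  \sum_(x : {ffun 'I_n -> 'I_k}) pt_weight w x * (meval P (pt x)) ^+ 2 = \sum_S P S ^+ 2.
Proof.
transitivity (\sum_S \sum_S' P S * P S' * \sum_(x : {ffun 'I_n -> 'I_k}) pt_weight w x *
   (\prod_(i in S) pt x i * \prod_(i in S') pt x i)).
  rewrite /meval.
  under eq_bigr => x _ do rewrite expr2 mulr_suml mulr_sumr.
  rewrite exchange_big /=; apply eq_bigr => S _.
  under eq_bigr => x _ do rewrite mulr_sumr mulr_sumr.
  rewrite exchange_big /=; apply eq_bigr => S' _.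
  rewrite mulr_sumr; apply eq_bigr => x _; ring.
apply eq_bigr => S _; under eq_bigr do rewrite mom.
rewrite (bigD1 S) //= eqxx mulr1 big1 ?addr0 ?expr2 // => S' /negbTE.
by rewrite eq_sym => ->; rewrite mulr0.
Qed.

End Mom.

Lemma Eeq n (P Q : mlpoly R n) (idd : ident_distr supp w P Q) (f : R -> R) :
  \sum_(x : {ffun 'I_n -> 'I_k}) pt_weight w x * f (meval P (pt x)) = \sum_(x : {ffun 'I_n -> 'I_k}) pt_weight w x * f (meval Q (pt x)).
Proof.
pose Yv := undup (map (fun x : {ffun 'I_n -> 'I_k} => meval P (pt x)) (enum {ffun 'I_n -> 'I_k})
   ++ map (fun x : {ffun 'I_n -> 'I_k} => meval Q (pt x)) (enum {ffun 'I_n -> 'I_k})).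
have uYv : uniq Yv := undup_uniq _.
have key (F : mlpoly R n) : (forall x : {ffun 'I_n -> 'I_k}, meval F (@pt R supp n x) \in Yv) ->
    \sum_(x : {ffun 'I_n -> 'I_k}) @pt_weight R supp w n x * f (meval F (@pt R supp n x)) = \sum_(y <- Yv) f y * prob_val supp w F y.
  move=> hF.
  transitivity (\sum_(x : {ffun 'I_n -> 'I_k}) \sum_(y <- Yv) @pt_weight R supp w n x * ((meval F (@pt R supp n x) == y)%:R * f y)).
    by apply eq_bigr => x _; rewrite -mulr_sumr (seq_ind f uYv (hF x)).
  rewrite exchange_big /=; apply eq_bigr => y _.
  rewrite mulrC /prob_val [in RHS]big_mkcond [RHS]mulr_suml; apply eq_bigr => x _ /=.
  case: eqP => _ /=; first by rewrite mulr1n mul1r; reflexivity.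
  by rewrite mulr0n mul0r mulr0.
rewrite !key; first by apply eq_bigr => y _; rewrite idd.
  by move=> x; rewrite mem_undup mem_cat orbC map_f ?mem_enum.
by move=> x; rewrite mem_undup mem_cat map_f ?mem_enum.
Qed.

End Samp.

Lemma meval_ext (R : realType) n (P : mlpoly R n) (f g : 'I_n -> R) : f =1 g -> meval P f = meval P g.
Proof. move=> h; rewrite /meval; apply eq_bigr => S _; congr (_ * _); apply eq_bigr => i _; exact: h. Qed.

Lemma min_pos (R : realType) (T : finType) (g : T -> R) :
  exists e : R, 0 < e /\ forall x, g x != 0 -> e <= g x ^+ 2.
Proof.
suff [e [he H]] : exists e : R, 0 < e /\ forall x, x \in enum T -> g x != 0 -> e <= g x ^+ 2.
  by exists e; split => // x; apply: H; rewrite mem_enum.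
elim: (enum T) => [|x s [e [he H]]]; first by exists 1.
have [gx0|gx] := eqVneq (g x) 0.
  exists e; split => // y; rewrite in_cons => /orP [/eqP -> |ys]; [by rewrite gx0 eqxx | exact: H].
have h2 : 0 < g x ^+ 2 by rewrite lt_neqAle sqr_ge0 andbT eq_sym expf_neq0.
exists (Order.min e (g x ^+ 2)); split; first by rewrite lt_min he h2.
move=> y; rewrite in_cons => /orP [/eqP -> _|ys hy]; rewrite ge_min ?lexx ?orbT //.
by rewrite H.
Qed.

Theorem theorem1p7 (R : realType) (supp : seq R) (w : R -> R) (d s T : nat) :
  uniq supp ->
  (forall a, a \in supp -> 0 < w a) ->
  \sum_(a <- supp) w a = 1 ->
  \sum_(a <- supp) w a * a = 0 ->
  \sum_(a <- supp) w a * a ^+ 2 = 1 ->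
  (exists t : nat, is_max_sparsity_gap supp w d s t /\ (T <= t - 1)%N /\ (0 < t)%N) ->
  exists eps : R, 0 < eps /\
  exists c : R, 0 < c /\
  exists N : nat,
  forall n : nat, (N <= n)%N ->
  forall K : R, 1 <= K ->
  forall (m : nat) (A : tester R n m),
    solves_testing supp w d s T K eps A ->
    c * ln (n%:R) <= m%:R.
Proof.
move=> usupp wpos hw1 hm1 hm2 [t [[[n0 [P0 [Q0 [dP0 [dQ0 [sP0 [sQ0 idd0]]]]]]] _] [hT ht]]].
have kpos : (0 < size supp)%N.
  rewrite lt0n size_eq0; apply/eqP => e; move: hw1; rewrite e big_nil => /eqP.
  by rewrite eq_sym oner_eq0.
have hn : \sum_S P0 S ^+ 2 = \sum_S Q0 S ^+ 2.
  by rewrite -(E2 hw1 hm1 hm2 P0) -(E2 hw1 hm1 hm2 Q0) (Eeq idd0 (fun v => v ^+ 2)).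
have [S1 hS1] : exists S1, Q0 S1 != 0.
  have : (0 < sparsity Q0)%N by rewrite sQ0.
  by rewrite /sparsity => /card_gt0P [S1]; rewrite inE => h; exists S1.
have r2pos : 0 < \sum_S Q0 S ^+ 2.
  rewrite (bigD1 S1) //=.
  have h1 : 0 < Q0 S1 ^+ 2 by rewrite lt_neqAle sqr_ge0 andbT eq_sym expf_neq0.
  have h2 : 0 <= \sum_(S | S != S1) Q0 S ^+ 2 by apply: sumr_ge0 => S _; exact: sqr_ge0.
  lra.
pose c := (Num.sqrt (\sum_S Q0 S ^+ 2))^-1.
have cpos : 0 < c by rewrite invr_gt0 sqrtr_gt0.
have cnz : c != 0 := lt0r_neq0 cpos.
have c2 : c ^+ 2 * \sum_S Q0 S ^+ 2 = 1.
  by rewrite /c exprVn sqr_sqrtr ?mulVf ?lt0r_neq0 // ltW.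
pose P := scal c P0. pose Q := scal c Q0.
have nP : coeff_norm P = 1 by rewrite /coeff_norm scal_sq hn c2 sqrtr1.
have nQ : coeff_norm Q = 1 by rewrite /coeff_norm scal_sq c2 sqrtr1.
have idd : ident_distr supp w P Q by move=> y; rewrite !scal_prob // idd0.
have dP : deg_le d P := scal_deg c dP0.
have dQ : deg_le d Q := scal_deg c dQ0.
have sP : sparsity P = s by rewrite scal_sparsity.
have sQ : sparsity Q = t by rewrite scal_sparsity.
have [e [epos he]] := min_pos (fun S => Q S).
exists (Num.sqrt e); split; first by rewrite sqrtr_gt0.
pose Er : R := (size supp ^ n0)%:R.
have Er1 : 1 <= Er by rewrite ler1n expn_gt0 kpos.
exists (2 * Er)^-1; split; first by rewrite invr_gt0 mulr_gt0 //; lra.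
exists ((8 * (n0 + 1)) * (8 * (n0 + 1)))%N.
move=> n hN K hK m A [A01 hA].
pose B := (n %/ (n0 + 1))%N.
have hd : (0 < n0 + 1)%N by rewrite addn1.
have blk (b : 'I_B) (i0 : 'I_n0) : (b * (n0 + 1) + i0 < n)%N.
  have h1 := leq_trunc_div n (n0 + 1); have h2 := ltn_ord b; have h3 := ltn_ord i0.
  rewrite -/B in h1; nia.
pose sb (b : 'I_B) (i0 : 'I_n0) : 'I_n := Ordinal (blk b i0).
have inj b : injective (sb b).
  by move=> i0 i1 /(congr1 val) /= h; apply: val_inj => /=; lia.
have disj (b b' : 'I_B) i0 i1 : b != b' -> sb b i0 != sb b' i1.
  move=> ne; apply/negP => /eqP /(congr1 val) /= h; move/negP: ne; apply; apply/eqP/val_inj => /=.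
  have := congr1 (fun x => x %/ (n0 + 1))%N h.
  by rewrite /= !divnMDl // !divn_small ?addn0 // addn1 ltnS ltnW.
pose A' := fun (xs : {ffun 'I_m -> {ffun 'I_n -> 'I_(size supp)}}) (y : {ffun 'I_m -> R}) =>
  A (fun j => (pt (xs j), y j + 0)).
have A01' xs y : 0 <= A' xs y <= 1 by exact: A01.
have accE (F : mlpoly R n0) b : accept_prob supp w A (emb (sb b) F)
    = \sum_xs Wgt w xs * A' xs (vecF F (zb (sb b) xs)).
  rewrite /accept_prob; apply eq_bigr => xs _; congr (_ * _).
  rewrite /A'; congr (A _); apply: functional_extensionality => j.
  rewrite /vecF /zb !ffunE emb_meval //; congr (_, _ + 0); apply: meval_ext => i0.
  by rewrite /pt /restr ffunE.
have hKn : K^-1 <= 1 <= K.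
  by apply/andP; split => //; rewrite invf_le1 //; lra.
have hPb b : 9/10 <= \sum_xs Wgt w xs * A' xs (vecF P (zb (sb b) xs)).
  have hnP : K^-1 <= coeff_norm (emb (sb b) P) <= K by rewrite emb_norm // nP.
  have [h1 _] := hA _ (emb_deg (inj b) dP) hnP.
  by rewrite -accE; apply: h1; rewrite emb_sparsity // sP.
have hQb b : \sum_xs Wgt w xs * A' xs (vecF Q (zb (sb b) xs)) <= 1/10.
  have hnQ : K^-1 <= coeff_norm (emb (sb b) Q) <= K by rewrite emb_norm // nQ.
  have [_ h2] := hA _ (emb_deg (inj b) dQ) hnQ.
  rewrite -accE; suff: 9/10 <= 1 - accept_prob supp w A (emb (sb b) Q) by lra.
  apply: h2; split.
    apply/eqP => e0; have := emb_norm (inj b) Q; rewrite e0 nQ /coeff_norm big1.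
      by rewrite sqrtr0 => /eqP; rewrite eq_sym oner_eq0.
    by move=> S _; rewrite ffunE expr2 mulr0.
  move=> q dq sq; rewrite emb_norm // nQ divr1.
  case: (pickP (fun S2 => (Q S2 != 0) && (q [set sb b x | x in S2] == 0))) => [S2 /andP [h1 /eqP h2'] | none]; last first.
    exfalso; have : (t <= T)%N.
      rewrite -sQ; apply: leq_trans sq; rewrite /sparsity -(card_imset _ (imset_inj (inj b))).
      apply: subset_leq_card; apply/subsetP => S /imsetP [S2]; rewrite inE => hS2 ->; rewrite inE.
      by move: (none S2); rewrite hS2 /= => /negbT.
    lia.
  rewrite /coeff_norm ler_sqrt; last by apply: sumr_ge0 => S _; exact: sqr_ge0.
  apply: (le_trans (he S2 h1)).
  have hE : [ffun S => emb (sb b) Q S - q S] [set sb b x | x in S2] = Q S2.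
    rewrite [LHS]ffunE h2' subr0; exact: emb_im.
  rewrite (bigD1 [set sb b x | x in S2]) //= hE.
  have : 0 <= \sum_(S | S != [set sb b x | x in S2]) ([ffun S => emb (sb b) Q S - q S] S) ^+ 2.
    by apply: sumr_ge0 => S _; exact: sqr_ge0.
  lra.
have := main_bound hw1 wpos inj disj idd A01' hPb hQb.
rewrite natrX -/Er => hB.
have hn1 : (n <= (B + 1) * (n0 + 1))%N.
  have := divn_eq n (n0 + 1); have := ltn_pmod n hd; rewrite -/B; nia.
have X1 : 1 <= Er ^+ m := exprn_ege1 m Er1.
have hnR : n%:R <= (B%:R + 1) * (n0%:R + 1) :> R.
  by move: hn1; rewrite -(ler_nat R) natrM !natrD.
have hnL : n%:R <= (8 * (n0%:R + 1)) * Er ^+ m :> R.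
  have : 0 <= n0%:R :> R := ler0n _ _.
  nra.
have hNn : (8 * (n0%:R + 1)) * (8 * (n0%:R + 1)) <= n%:R :> R.
  by move: hN; rewrite -(ler_nat R) !natrM natrD.
have Lpos : 0 < 8 * (n0%:R + 1) :> R by have : 0 <= n0%:R :> R := ler0n _ _; lra.
have npos : 0 < n%:R :> R by nra.
have Epos : 0 < Er by lra.
have ln1 : ln (n%:R : R) <= ln (8 * (n0%:R + 1)) + m%:R * ln Er.
  rewrite [m%:R * _]mulr_natl -lnXn // -lnM ?posrE ?exprn_gt0 //.
  have hpos : 0 < 8 * (n0%:R + 1) * Er ^+ m by apply: mulr_gt0 => //; exact: exprn_gt0.
  by rewrite ler_ln ?posrE.
have ln2 : 2 * ln (8 * (n0%:R + 1) : R) <= ln (n%:R : R).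
  have -> : 2 * ln (8 * (n0%:R + 1) : R) = ln ((8 * (n0%:R + 1)) * (8 * (n0%:R + 1))).
    have e2 : ln ((8 * (n0%:R + 1)) * (8 * (n0%:R + 1))) = ln (8 * (n0%:R + 1) : R) + ln (8 * (n0%:R + 1) : R).
      by rewrite lnM ?posrE.
    rewrite e2; ring.
  have hpos : 0 < 8 * (n0%:R + 1) * (8 * (n0%:R + 1)) :> R by apply: mulr_gt0.
  by rewrite ler_ln ?posrE.
have lnE : ln Er <= Er - 1.
  have h := @le_ln1Dx R (Er - 1).
  have e3 : 1 + (Er - 1) = Er by ring.
  rewrite e3 in h; apply: h; lra.
have m0 : 0 <= m%:R :> R := ler0n _ _.
rewrite ler_pdivrMl; last by rewrite mulr_gt0 //; lra.
nra.
Qed.
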